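(* Let $2\le r_1<r_2$ be integers, let $T\in\mathfrak{F}(n)$ and let $\lambda=\rho(T)$. Put $\theta=\frac{-\lambda-\sqrt{\lambda^2-4}}{2}$ and $a_2=-\lambda+\frac{1}{\lambda}$. For a real $r\ge 2$ define the sequence $z_1(r)=-\lambda-\frac{r}{a_2}$, $z_{j+1}(r)=-\lambda-\frac{1}{z_j(r)}$ for $j\ge1$. Then: (a) $z_j(r)=\theta+\frac{\theta^{-1}-\theta}{\beta(\theta^2)^j+1}$, where $\beta=\beta(r)=\frac{r-a_2\theta}{a_2\theta-r\theta^2}$; (b) $\beta(r)$ is a continuous function of $r$ on $(2,\infty)\setminus\{r_*\}$, where $r_*=\frac{a_2}{\theta}$; moreover $\beta(r)$ has a single root, at $r^*=a_2\theta$, and $\beta(r)>0$ for $r\in(r_*,r^* )$; (c) for $r\in\{r_1,r_2\}$, the sequence $(z_j(r))_{j\ge1}$ satisfies $z_j(r)<0$ for all $j\ge1$, is decreasing, and $\lim_{j\to\infty}z_j(r)=\theta$.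
   Context: $\rho(G)$ denotes the spectral radius (largest eigenvalue of the adjacency matrix) of a graph $G$. For integers $h,q_1,q_2\ge 2$ and fixed integers $2\le r_1<r_2$, the tree $[h,q_1,q_2]$ is constructed as follows: take a vertex $u$; attach to $u$ a pendant path with $h$ edges; attach to $u$ a path with $q_1$ edges ending at a vertex $v_1$, and attach to $v_1$ exactly $r_1$ pendant paths with $2$ edges each; attach to $u$ a path with $q_2$ edges ending at a vertex $v_2$, and attach to $v_2$ exactly $r_2$ pendant paths with $2$ edges each. It has $n=1+h+q_1+q_2+2(r_1+r_2)$ vertices. $\mathfrak{F}(n)$ is the set of all such trees $[h,q_1,q_2]$ with $h,q_1,q_2\ge2$ and $h+q_1+q_2=n-1-2(r_1+r_2)$. *)

(* Defs.v *)
From HB Require Import structures.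
From mathcomp Require Import all_boot all_order all_algebra.
From mathcomp Require Import all_classical all_reals all_analysis.
Set Implicit Arguments. Unset Strict Implicit. Unset Printing Implicit Defensive.
Import Order.TTheory GRing.Theory Num.Theory.

(* The tree [h,q1,q2] (with r1 r2 pendant P3's at v1, v2), vertices 0..n-1:
   u = 0;
   pendant path u-1-2-...-h;
   path u-(h+1)-...-(h+q1) = v1;
   r1 pendant paths of 2 edges at v1: v1-(c0+2k)-(c0+2k+1), k < r1, c0 = h+q1+1;
   path u-d0-(d0+1)-...-(d0+q2-1) = v2, d0 = c0 + 2 r1;
   r2 pendant paths of 2 edges at v2: v2-(e0+2k)-(e0+2k+1), k < r2, e0 = d0+q2. *)
Definition tree_order (h q1 q2 r1 r2 : nat) : nat := 1 + h + q1 + q2 + 2 * (r1 + r2).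

Definition tparent (h q1 q2 r1 r2 i : nat) : nat :=
  let c0 := h + q1 + 1 in
  let d0 := c0 + 2 * r1 in
  let e0 := d0 + q2 in
  if (i <= h)%N then i.-1
  else if i == h + 1 then 0%N
  else if (i < c0)%N then i.-1
  else if (i < d0)%N then (if odd (i - c0) then i.-1 else h + q1)%N
  else if i == d0 then 0%N
  else if (i < e0)%N then i.-1
  else (if odd (i - e0) then i.-1 else e0.-1).

Definition tree_edge (h q1 q2 r1 r2 i j : nat) : bool :=
  ((i != 0%N) && (tparent h q1 q2 r1 r2 i == j)) ||
  ((j != 0%N) && (tparent h q1 q2 r1 r2 j == i)).

Definition tree_adj (R : fieldType) (h q1 q2 r1 r2 : nat)
  : 'M[R]_(tree_order h q1 q2 r1 r2) :=
  \matrix_(i, j) ((tree_edge h q1 q2 r1 r2 i j : nat)%:R)%R.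

Local Open Scope ring_scope.

Definition is_spectral_radius (R : realFieldType) (n : nat) (A : 'M[R]_n) (l : R) : Prop :=
  eigenvalue A l /\ (forall m, eigenvalue A m -> m <= l).

Section Seq.
Variable R : rcfType.
Definition theta (l : R) : R := (- l - Num.sqrt (l ^+ 2 - 4)) / 2.
Definition a2 (l : R) : R := - l + l^-1.
Definition beta (l r : R) : R :=
  (r - a2 l * theta l) / (a2 l * theta l - r * theta l ^+ 2).
Definition rlow (l : R) : R := a2 l / theta l.
Definition rup (l : R) : R := a2 l * theta l.
(* zseq l r j = z_j(r) for j >= 1 (index 0 unused) *)
Fixpoint zseq (l r : R) (j : nat) : R :=
  match j with
  | 0 => 0
  | 1 => - l - r / a2 l
  | k.+1 => - l - (zseq l r k)^-1
  end.
End Seq.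

(* Main.v *)
Require Import Defs.
From HB Require Import structures.
From mathcomp Require Import all_boot all_order all_algebra.
From mathcomp Require Import all_classical all_reals all_analysis.
From mathcomp Require Import ring lra zify.
From Stdlib Require Import Lia.
Set Implicit Arguments. Unset Strict Implicit. Unset Printing Implicit Defensive.
Import Order.TTheory GRing.Theory Num.Theory numFieldNormedType.Exports.
Local Open Scope classical_set_scope.
Local Open Scope ring_scope.
Section Spec.
Variable R : realType.
Variable n : nat.
Implicit Types u v y : 'rV[R]_n.

Definition dotv u v : R := \sum_i u ord0 i * v ord0 i.
Definition qv (A : 'M[R]_n) u v : R := \sum_i \sum_j u ord0 i * A i j * v ord0 j.

Lemma dotv_ge0 v : 0 <= dotv v v.
Proof. by apply: sumr_ge0 => i _; rewrite -expr2 sqr_ge0. Qed.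

Lemma dotv_eq0 v : dotv v v = 0 -> v = 0.
Proof.
move=> H; apply/rowP => j; rewrite mxE.
have := @psumr_eq0P _ _ xpredT (fun i => v ord0 i * v ord0 i).
have hp : forall i, xpredT i -> 0 <= v ord0 i * v ord0 i by move=> i _; rewrite -expr2 sqr_ge0.
move=> /(_ hp H j isT) /eqP.
by rewrite mulf_eq0 orbb => /eqP ->.
Qed.

Lemma dotvZ k v : dotv (k *: v) (k *: v) = k ^+ 2 * dotv v v.
Proof.
rewrite /dotv mulr_sumr; apply: eq_bigr => i _; rewrite !mxE; ring.
Qed.

Lemma qvZ (A : 'M[R]_n) k v : qv A (k *: v) (k *: v) = k ^+ 2 * qv A v v.
Proof.
rewrite /qv mulr_sumr; apply: eq_bigr => i _; rewrite mulr_sumr.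
apply: eq_bigr => j _; rewrite !mxE; ring.
Qed.

Lemma qv0 (A : 'M[R]_n) v : v = 0 -> qv A v v = 0.
Proof. by move=> ->; rewrite /qv big1 // => i _; rewrite big1 // => j _; rewrite !mxE !mul0r. Qed.

Lemma dotv_expand u y (e : R) : dotv (u + e *: y) (u + e *: y) =
  dotv u u + e * (2 * dotv u y) + e ^+ 2 * dotv y y.
Proof.
rewrite /dotv !mulr_sumr -!big_split /=; apply: eq_bigr => i _.
rewrite !mxE; ring.
Qed.

Lemma qv_expand (A : 'M[R]_n) u y (e : R) : (forall i j, A i j = A j i) ->
  qv A (u + e *: y) (u + e *: y) =
  qv A u u + e * (2 * qv A u y) + e ^+ 2 * qv A y y.
Proof.
move=> As.
have sym : qv A y u = qv A u y.
  rewrite /qv exchange_big; apply: eq_bigr => i _; apply: eq_bigr => j _.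
  by rewrite As; ring.
have -> : qv A (u + e *: y) (u + e *: y) =
  qv A u u + e * (qv A u y + qv A y u) + e ^+ 2 * qv A y y.
  rewrite /qv mulrDr !mulr_sumr -!big_split /=; apply: eq_bigr => i _.
  rewrite !mulr_sumr -!big_split /=; apply: eq_bigr => j _.
  rewrite !mxE; ring.
by rewrite sym; congr (_ + _ * _ + _); ring.
Qed.

Lemma dotv_cont : continuous (fun v : 'rV[R]_n => dotv v v).
Proof.
rewrite /dotv.
apply: (continuous_big (@add_continuous R^o)) => i _.
move=> y; apply: continuousM; exact: coord_continuous.
Qed.

Lemma qv_cont (A : 'M[R]_n) : continuous (fun v : 'rV[R]_n => qv A v v).
Proof.
rewrite /qv.
apply: (continuous_big (@add_continuous R^o)) => i _.
apply: (continuous_big (@add_continuous R^o)) => j _.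
move=> z.
apply: (@continuousM R _ (fun x : 'rV[R]_n => x ord0 i * A i j) (fun x : 'rV[R]_n => x ord0 j)); last exact: coord_continuous.
apply: (@continuousM R _ (fun x : 'rV[R]_n => x ord0 i) (fun x : 'rV[R]_n => A i j)); last exact: cst_continuous.
exact: coord_continuous.
Qed.

End Spec.
Lemma rayleigh (R : realType) (n : nat) (A : 'M[R]_n) (l : R) :
  (forall i j, A i j = A j i) -> (forall m, eigenvalue A m -> m <= l) ->
  forall v, qv A v v <= l * dotv v v.
Proof.
case: n A => [|k] A As Hl v.
  by rewrite /qv /dotv !big_ord0 mulr0.
pose S := [set v : 'rV[R]_k.+1 | dotv v v = 1].
have S0 : S !=set0.
  exists (\row_j ((j == ord0)%:R : R)); rewrite /S /= /dotv (bigD1 ord0) //= big1.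
    by rewrite !mxE eqxx mulr1 addr0.
  by move=> i /negbTE Hi; rewrite !mxE Hi mul0r.
have cS : compact S.
  have clS : closed ((fun v : 'rV[R]_k.+1 => dotv v v) @^-1` [set x : R | x = 1]).
    have := @preimage_closed _ _ (fun v : 'rV[R]_k.+1 => dotv v v) [set x : R | x = 1].
    move=> H; apply: H.
      by move=> x _; exact: dotv_cont.
    exact: closed_eq.
  apply: (@subclosed_compact _ S [ set v : 'rV[R]_k.+1 | forall i, `[-1, 1]%classic (v ord0 i)]).
  - exact: clS.
  - have := @rV_compact _ k.+1 (fun=> `[(-1 : R), 1]%classic).
    by move=> H; apply: H => i; exact: segment_compact.
  - move=> w Sw i /=; rewrite in_itv /=.
    have : w ord0 i * w ord0 i <= 1.
      rewrite -Sw /dotv (bigD1 i) //= lerDl; apply: sumr_ge0 => j _.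
      by rewrite -expr2 sqr_ge0.
    move=> H; apply/andP; split; nra.
have [c cS' cmax] := EVT_max_rV S0 cS (continuous_subspaceT (@qv_cont _ _ A)).
have cSS : dotv c c = 1 by move: cS'; rewrite inE.
set M := qv A c c.
have Hle : forall v, qv A v v <= M * dotv v v.
  move=> w; case: (dotv w w =P 0) => [H0|nz].
    by rewrite H0 mulr0 qv0 //; exact: dotv_eq0.
  have dpos : 0 < dotv w w by rewrite lt_neqAle eq_sym; apply/andP; split; [apply/eqP|exact: dotv_ge0].
  set s := Num.sqrt (dotv w w).
  have spos : 0 < s by rewrite sqrtr_gt0.
  have ss : s ^+ 2 = dotv w w by rewrite sqr_sqrtr // ltW.
  have wS : (s^-1 *: w) \in S.
    rewrite inE /S /= dotvZ -ss exprVn mulVf //.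
    by rewrite expf_neq0 // gt_eqF.
  have := cmax _ wS; rewrite qvZ -ss.
  set t := s^-1; have ts : t * s = 1 by rewrite mulVf // gt_eqF.
  move=> H.
  have -> : qv A w w = s ^+ 2 * (t ^+ 2 * qv A w w).
    by rewrite mulrA -exprMn (mulrC s) ts expr1n mul1r.
  by rewrite mulrC ler_wpM2r // sqr_ge0.
have eig : c *m A = M *: c.
  pose y := M *: c - c *m A.
  pose P := M * dotv c y - qv A c y.
  pose Q := M * dotv y y - qv A y y.
  have Qge : 0 <= Q by rewrite subr_ge0 Hle.
  have key : forall e, 0 <= e * (2 * P) + e ^+ 2 * Q.
    move=> e; have := Hle (c + e *: y).
    rewrite qv_expand // dotv_expand // cSS -subr_ge0 /P /Q /M.
    move=> H; apply: le_trans H _; rewrite le_eqVlt; apply/orP; left; apply/eqP; ring.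
  have P0 : P = 0.
    have := key (- P / (Q + 1)).
    have Q1 : Q + 1 != 0 by rewrite gt_eqF // ltr_pwDr.
    set e := - P / (Q + 1).
    have eQ : e * (Q + 1) = - P by rewrite /e mulrVK // unitfE.
    move=> H.
    have H2 : 0 <= (Q + 1) ^+ 2 * (e * (2 * P) + e ^+ 2 * Q) by apply: mulr_ge0 => //; exact: sqr_ge0.
    have H3 : (Q + 1) ^+ 2 * (e * (2 * P) + e ^+ 2 * Q) = - (P ^+ 2 * (Q + 2)).
      have -> : (Q + 1) ^+ 2 * (e * (2 * P) + e ^+ 2 * Q) =
        (e * (Q + 1)) * (Q + 1) * (2 * P) + (e * (Q + 1)) ^+ 2 * Q by ring.
      rewrite eQ; ring.
    rewrite H3 oppr_ge0 in H2.
    have : 0 <= P ^+ 2 * (Q + 2) by apply: mulr_ge0; [exact: sqr_ge0| lra].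
    move=> H4; have H5 : P ^+ 2 * (Q + 2) = 0 by apply/eqP; rewrite eq_le H2 H4.
    move/eqP: H5; rewrite mulf_eq0 => /orP[/eqP|/eqP]; first by move/eqP; rewrite sqrf_eq0 => /eqP.
    lra.
  have qcy : qv A c y = \sum_j (c *m A) ord0 j * y ord0 j.
    rewrite /qv exchange_big /=; apply: eq_bigr => j _; rewrite [(c *m A) _ _]mxE mulr_suml.
    by apply: eq_bigr => i _.
  have yj : forall j, y ord0 j = M * c ord0 j - (c *m A) ord0 j by move=> j; rewrite !mxE.
  have Py : P = dotv y y.
    rewrite /P qcy /dotv mulr_sumr -sumrB; apply: eq_bigr => j _.
    by rewrite mulrA -mulrBl -yj.
  have y0 : y = 0 by apply: dotv_eq0; rewrite -Py.
  by move/eqP: y0; rewrite subr_eq0 => /eqP ->.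
have eM : eigenvalue A M.
  apply/eigenvalueP; exists c => //.
  apply/eqP => c0; move: cSS; rewrite c0 /dotv big1 ?mxE => [/eqP|i _]; last by rewrite mxE mul0r.
  by rewrite eq_sym oner_eq0.
apply: le_trans (Hle v) _; apply: ler_wpM2r; [exact: dotv_ge0 | exact: Hl].
Qed.
Lemma sum_pick (R : realType) n (k : nat) (F : nat -> R) : (k < n)%N ->
  \sum_(j < n) ((k == j :> nat) : nat)%:R * F j = F k.
Proof.
move=> kn; rewrite (bigD1 (Ordinal kn)) //= eqxx mul1r big1 ?addr0 //.
move=> j /negbTE Hj; suff -> : (k == j :> nat) = false by rewrite mul0r.
by apply/negbTE; apply: contraFN Hj => /eqP e; apply/eqP/val_inj.
Qed.

Definition edgeP (par : nat -> nat) (i j : nat) : bool :=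
  ((i != 0%N) && (par i == j)) || ((j != 0%N) && (par j == i)).
Definition edge1 (par : nat -> nat) (i j : nat) : bool := (i != 0%N) && (par i == j).

Lemma qform_tree (R : realType) n (par : nat -> nat) (x : nat -> R) :
  (forall i, (0 < i)%N -> (par i < i)%N) ->
  \sum_(i < n) \sum_(j < n) x i * ((edgeP par i j : nat)%:R) * x j
  = \sum_(i < n) (if (i == 0%N :> nat) then 0 else 2 * (x i * x (par i))).
Proof.
move=> Hp.
have Hsplit : forall i j : nat, ((edgeP par i j) : nat)%:R
   = ((edge1 par i j) : nat)%:R + ((edge1 par j i) : nat)%:R :> R.
  move=> i j; rewrite /edgeP /edge1; case: (boolP ((i != 0%N) && (par i == j))) => [/andP[i0 /eqP pij]|_].
    case: (boolP ((j != 0%N) && (par j == i))) => [/andP[j0 /eqP pji]|_].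
      have := Hp i; have := Hp j; rewrite !lt0n i0 j0 pij pji => H1 H2.
      have := H1 isT; have := H2 isT; lia.
    by rewrite /= addr0.
  by rewrite /= add0r.
have S1 : forall i : 'I_n, \sum_(j < n) x i * ((edge1 par i j : nat)%:R) * x j
    = (if (i == 0%N :> nat) then 0 else x i * x (par i)).
  move=> i; case: ifP => [/eqP i0|/negbT i0].
    by rewrite big1 // => j _; rewrite /edge1 i0 /= mulr0 mul0r.
  have pn : (par i < n)%N by apply: (ltn_trans (Hp _ _) (ltn_ord i)); rewrite lt0n.
  rewrite -(sum_pick (fun j => x i * x j) pn); apply: eq_bigr => j _.
  by rewrite /edge1 i0 /=; ring.
transitivity (\sum_(i < n) \sum_(j < n) x i * ((edge1 par i j : nat)%:R) * x j +
              \sum_(i < n) \sum_(j < n) x j * ((edge1 par j i : nat)%:R) * x i).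
  rewrite -big_split; apply: eq_bigr => i _; rewrite -big_split; apply: eq_bigr => j _.
  rewrite Hsplit mulrDr mulrDl; congr (_ + _); ring.
rewrite [X in _ + X]exchange_big /= -big_split; apply: eq_bigr => i _.
rewrite S1; case: ifP => _; first exact: (addr0 (0 : R)).
by rewrite [RHS]mulr_natl mulr2n.
Qed.

Lemma tparent_lt h q1 q2 r1 r2 i : (0 < i)%N -> (tparent h q1 q2 r1 r2 i < i)%N.
Proof.
move=> i0; rewrite /tparent.
repeat (case: ifP => ?); lia.
Qed.
Ltac sif := repeat first [rewrite ifT; [|lia] | rewrite ifF; [|apply/negbTE; lia]].

Section TV.
Variable R : realType.
Variables (h q1 q2 r1 r2 : nat) (t mu G bb aa : R).
Hypotheses (h2 : (2 <= h)%N) (q12 : (2 <= q1)%N) (q21 : (1 <= q2)%N).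

Definition tvec (i : nat) : R :=
  if i == 0%N then 1 else if i == 1%N then t else if i == 2%N then t / mu
  else if i == (h+1)%N then t else if i == (h+2)%N then t / mu
  else if ((h + q1 + 1 + 2*r1) <= i < (h + q1 + 1 + 2*r1 + q2))%N then G ^+ (i - (h + q1 + 1 + 2*r1) + 1)
  else if ((h + q1 + 1 + 2*r1 + q2) <= i)%N then
     (if odd (i - (h + q1 + 1 + 2*r1 + q2)) then G ^+ q2 * aa else G ^+ q2 * bb)
  else 0.

Local Notation d0 := (h + q1 + 1 + 2*r1)%N.
Local Notation e0 := (h + q1 + 1 + 2*r1 + q2)%N.
Local Notation par := (tparent h q1 q2 r1 r2).

Lemma tv0 : tvec 0 = 1. Proof. by []. Qed.
Lemma tv1 : tvec 1 = t. Proof. by []. Qed.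
Lemma tv2 : tvec 2 = t / mu. Proof. by []. Qed.
Lemma tvh1 : tvec (h+1) = t. Proof. rewrite /tvec; sif; done. Qed.
Lemma tvh2 : tvec (h+2) = t / mu. Proof. rewrite /tvec; sif; done. Qed.
Lemma tvp k : (k < q2)%N -> tvec (d0 + k) = G ^+ k.+1.
Proof. move=> kq; rewrite /tvec; sif; congr (_ ^+ _); lia. Qed.
Lemma tvm k : tvec (e0 + 2 * k) = G ^+ q2 * bb.
Proof. rewrite /tvec; sif; done. Qed.
Lemma tvl k : tvec (e0 + 2 * k + 1) = G ^+ q2 * aa.
Proof. rewrite /tvec; sif; done. Qed.
Lemma tvz i : ((3 <= i < h + 1) || (h + 3 <= i < d0))%N -> tvec i = 0.
Proof. move=> Hi; rewrite /tvec; sif; done. Qed.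

Lemma pa1 : par 1 = 0%N. Proof. rewrite /tparent; sif; done. Qed.
Lemma pa2 : par 2 = 1%N. Proof. rewrite /tparent; sif; done. Qed.
Lemma pah1 : par (h+1) = 0%N. Proof. rewrite /tparent; sif; done. Qed.
Lemma pah2 : par (h+2) = (h+1)%N. Proof. rewrite /tparent; sif; lia. Qed.
Lemma pap k : (k < q2)%N -> par (d0 + k) = if k == 0%N then 0%N else (d0 + k).-1.
Proof. move=> kq; case: (k =P 0%N) => [->|/eqP k0]; rewrite /tparent; sif; lia. Qed.
Lemma pam k : par (e0 + 2 * k) = (e0 - 1)%N.
Proof. rewrite /tparent; sif; lia. Qed.
Lemma pal k : par (e0 + 2 * k + 1) = (e0 + 2 * k)%N.
Proof. rewrite /tparent; sif; lia. Qed.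

End TV.
Lemma sum_shift (R : realType) (f : nat -> R) m q :
  \sum_(m <= i < m + q) f i = \sum_(k < q) f (m + k)%N.
Proof.
elim: q => [|q IH]; first by rewrite addn0 big_geq // big_ord0.
by rewrite addnS big_nat_recr /= ?leq_addr // IH big_ord_recr.
Qed.

Lemma sum_pairs (R : realType) (f : nat -> R) m r :
  \sum_(m <= i < m + 2 * r) f i = \sum_(k < r) (f (m + 2 * k)%N + f (m + 2 * k + 1)%N).
Proof.
elim: r => [|r IH]; first by rewrite muln0 addn0 big_geq // big_ord0.
rewrite big_ord_recr /= -IH (_ : (m + 2 * r.+1 = (m + 2 * r).+2)%N); last lia.
rewrite big_nat_recr /=; last lia.
rewrite big_nat_recr /=; last lia.
by rewrite addn1 addrA.
Qed.

Section TS.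
Variable R : realType.
Variables (h q1 q2 r1 r2 : nat) (t mu G bb aa : R).
Hypotheses (h2 : (2 <= h)%N) (q12 : (2 <= q1)%N) (q21 : (1 <= q2)%N).

Local Notation d0 := (h + q1 + 1 + 2*r1)%N.
Local Notation e0 := (h + q1 + 1 + 2*r1 + q2)%N.
Local Notation par := (tparent h q1 q2 r1 r2).
Local Notation x := (tvec h q1 q2 r1 t mu G bb aa).

Definition psi (i : nat) : R :=
  (if i == 0%N then 0 else 2 * (x i * x (par i))) - mu * (x i * x i).

Lemma psi_z i : x i = 0 -> psi i = 0.
Proof. by move=> H; rewrite /psi H !mul0r; case: ifP => _; rewrite ?mulr0 ?subr0. Qed.

Lemma psi_split :
  \sum_(i < tree_order h q1 q2 r1 r2) psi i =
  psi 0 + psi 1 + psi 2 + psi (h+1) + psi (h+2) +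
  \sum_(k < q2) psi (d0 + k) + \sum_(k < r2) (psi (e0 + 2 * k) + psi (e0 + 2 * k + 1)).
Proof.
have -> : tree_order h q1 q2 r1 r2 = (e0 + 2 * r2)%N by rewrite /tree_order; lia.
rewrite -(big_mkord xpredT).
rewrite (@big_cat_nat _ _ _ d0) /=; [|lia|lia].
rewrite (@big_cat_nat _ _ _ e0 d0) /=; [|lia|lia].
rewrite (sum_shift _ d0 q2) sum_pairs.
rewrite big_ltn; last lia.
rewrite big_ltn; last lia.
rewrite big_ltn; last lia.
rewrite (@big_cat_nat _ _ _ (h+1) 3) /=; [|lia|lia].
rewrite (@big_ltn _ _ _ (h+1)); last lia.
rewrite (@big_ltn _ _ _ (h+1).+1); last lia.
rewrite (_ : ((h + 1).+1 = h + 2)%N); last lia.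
rewrite (_ : ((h + 2).+1 = h + 3)%N); last lia.
rewrite (big_nat_cond _ _ 3) big1; last first.
  move=> i /andP[/andP[H1 H2] _]; apply: psi_z; apply: tvz => //; lia.
rewrite (big_nat_cond _ _ (h+3)) big1; last first.
  move=> i /andP[/andP[H1 H2] _]; apply: psi_z; apply: tvz => //; lia.
rewrite !addr0 /=; ring.
Qed.

End TS.
Section TS2.
Variable R : realType.
Variables (h q1 q2 r1 r2 : nat) (t mu G bb aa : R).
Hypotheses (h2 : (2 <= h)%N) (q12 : (2 <= q1)%N) (q21 : (1 <= q2)%N).

Local Notation d0 := (h + q1 + 1 + 2*r1)%N.
Local Notation e0 := (h + q1 + 1 + 2*r1 + q2)%N.
Local Notation par := (tparent h q1 q2 r1 r2).
Local Notation x := (tvec h q1 q2 r1 t mu G bb aa).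
Local Notation psi := (psi h q1 q2 r1 r2 t mu G bb aa).

Lemma psi_total :
  \sum_(i < tree_order h q1 q2 r1 r2) psi i =
  - mu + 2 * ((2 * t - mu * t ^+ 2) + (2 * (t / mu * t) - mu * (t / mu) ^+ 2)) +
  \sum_(k < q2) (2 * (G ^+ k.+1 * G ^+ k) - mu * (G ^+ k.+1) ^+ 2) +
  r2%:R * ((G ^+ q2) ^+ 2 * (2 * bb - mu * bb ^+ 2 + 2 * aa * bb - mu * aa ^+ 2)).
Proof.
rewrite psi_split //.
have p0 : psi 0 = - mu by rewrite /psi /= tv0 !mulr1 sub0r.
have p1 : psi 1 = 2 * t - mu * t ^+ 2.
  by rewrite /psi /= pa1 // tv1 tv0 mulr1 expr2.
have p2 : psi 2 = 2 * (t / mu * t) - mu * (t / mu) ^+ 2.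
  by rewrite /psi /= pa2 // tv1 tv2 expr2.
have ph1 : psi (h + 1) = 2 * t - mu * t ^+ 2.
  rewrite /psi ifF; last (apply/negbTE; lia).
  by rewrite pah1 // tvh1 // tv0 mulr1 expr2.
have ph2 : psi (h + 2) = 2 * (t / mu * t) - mu * (t / mu) ^+ 2.
  rewrite /psi ifF; last (apply/negbTE; lia).
  by rewrite pah2 // tvh1 // tvh2 // expr2.
have pp : forall k : 'I_q2, psi (d0 + k) = 2 * (G ^+ k.+1 * G ^+ k) - mu * (G ^+ k.+1) ^+ 2.
  move=> [m kq] /=; rewrite /psi ifF; last (apply/negbTE; lia).
  rewrite tvp // pap //; case: (m =P 0%N) => [->|/eqP k0].
    by rewrite tv0 expr0 expr2.
  rewrite (_ : ((d0 + m).-1 = d0 + m.-1)%N); last lia.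
  rewrite tvp //; last lia.
  by rewrite prednK ?lt0n // expr2.
have pm : forall k : 'I_r2, psi (e0 + 2 * k) + psi (e0 + 2 * k + 1) =
    (G ^+ q2) ^+ 2 * (2 * bb - mu * bb ^+ 2 + 2 * aa * bb - mu * aa ^+ 2).
  move=> kk; case: kk => kk kr /=; rewrite /psi ifF; last (apply/negbTE; lia).
  rewrite ifF; last (apply/negbTE; lia).
  rewrite pam // pal // tvm // tvl //.
  rewrite (_ : (e0 - 1 = d0 + (q2 - 1))%N); last lia.
  rewrite tvp //; last lia.
  rewrite (_ : (q2 - 1).+1 = q2); last lia.
  ring.
rewrite p0 p1 p2 ph1 ph2 (eq_bigr _ (fun k _ => pp k)) (eq_bigr _ (fun k _ => pm k)).
rewrite sumr_const card_ord -mulr_natl; ring.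
Qed.

End TS2.

Lemma geo_tel (R : realType) (mu G : R) q : G != 0 -> mu = G + G^-1 ->
  \sum_(k < q) (2 * (G ^+ k.+1 * G ^+ k) - mu * (G ^+ k.+1) ^+ 2) = G - G ^+ (2 * q).+1.
Proof.
move=> G0 ->; elim: q => [|q IH]; first by rewrite big_ord0 muln0 expr1 subrr.
rewrite big_ord_recr /= IH.
have -> : (2 * q.+1).+1 = ((2 * q).+1).+2 by lia.
by rewrite !exprS (mulnC 2 q) exprM; field.
Qed.
Lemma alg_pos (R : realType) (mu G P r t0 a0 : R) :
  1 <= G -> mu = G + G^-1 -> 0 <= P -> G <= r * (mu / (mu ^+ 2 - 1)) ->
  t0 = mu / (mu ^+ 2 - 1) -> a0 = 1 / (mu ^+ 2 - 1) ->
  0 < - mu + 2 * ((2 * t0 - mu * t0 ^+ 2) + (2 * (t0 / mu * t0) - mu * (t0 / mu) ^+ 2)) +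
      (G - G * P) + r * (P * (2 * t0 - mu * t0 ^+ 2 + 2 * a0 * t0 - mu * a0 ^+ 2)).
Proof.
move=> G1 muE P0 Hr -> ->; set t := mu / (mu ^+ 2 - 1); set aa := 1 / (mu ^+ 2 - 1).
have Gpos : 0 < G by lra.
have G0 : G != 0 by rewrite gt_eqF.
set iG := G^-1 in muE *.
have GiG : G * iG = 1 by rewrite mulfV.
have iG0 : 0 < iG by rewrite invr_gt0.
have iG1 : iG <= 1 by rewrite invf_le1.
have mu0 : 0 < mu by rewrite muE; apply: addr_gt0.
have m21 : 0 < mu ^+ 2 - 1.
  rewrite muE; have -> : (G + iG) ^+ 2 - 1 = G ^+ 2 + 1 + iG ^+ 2 by rewrite sqrrD GiG; ring.
  by apply: ltr_wpDr; [exact: sqr_ge0 | apply: ltr_wpDl; [exact: sqr_ge0 | exact: ltr01]].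
have m0 : mu != 0 by rewrite gt_eqF.
have m2 : mu ^+ 2 - 1 != 0 by rewrite gt_eqF.
have br : (2 * t - mu * t ^+ 2) + (2 * (t / mu * t) - mu * (t / mu) ^+ 2) = t.
  rewrite /t; field; by rewrite m0 m2.
have pr : 2 * t - mu * t ^+ 2 + 2 * aa * t - mu * aa ^+ 2 = t.
  rewrite /t /aa; field; by rewrite m2.
rewrite br pr.
have tpos : iG < 2 * t.
  rewrite /t -subr_gt0.
  have -> : 2 * (mu / (mu ^+ 2 - 1)) - iG = (2 * mu - iG * (mu ^+ 2 - 1)) / (mu ^+ 2 - 1).
    by field.
  apply: divr_gt0 => //.
  have -> : 2 * mu - iG * (mu ^+ 2 - 1) = G + iG - iG * iG * iG.
    rewrite muE; have -> : (G + iG) ^+ 2 - 1 = G * G + 1 + iG * iG by rewrite sqrrD GiG; ring.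
    have -> : iG * (G * G + 1 + iG * iG) = (G * iG) * G + iG + iG * iG * iG by ring.
    rewrite GiG; ring.
  have : iG * iG * iG <= iG.
    have : iG * iG <= 1 by rewrite -expr2 exprn_ile1 // ltW.
    move=> H; nra.
  move=> H; lra.
have : G <= r * t by [].
move=> Hrt.
have : 0 <= P * (r * t - G) by apply: mulr_ge0 => //; rewrite subr_ge0.
rewrite muE; move: tpos; rewrite -/iG; nra.
Qed.
Lemma test_gt (R : realType) (r1 r2 h q1 q2 : nat) (l mu G : R) :
  (2 <= h)%N -> (2 <= q1)%N -> (1 <= q2)%N ->
  is_spectral_radius (tree_adj R h q1 q2 r1 r2) l ->
  1 <= G -> mu = G + G^-1 -> G <= r2%:R * (mu / (mu ^+ 2 - 1)) -> mu < l.
Proof.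
move=> h2 q12 q21 [_ Hmax] G1 muE Hr.
have G0 : G != 0 by rewrite gt_eqF //; lra.
set t := mu / (mu ^+ 2 - 1).
set aa := 1 / (mu ^+ 2 - 1).
set n := tree_order h q1 q2 r1 r2.
pose x := tvec h q1 q2 r1 t mu G t aa.
pose X : 'rV[R]_n := \row_(i < n) x i.
have As : forall i j, tree_adj R h q1 q2 r1 r2 i j = tree_adj R h q1 q2 r1 r2 j i.
  by move=> i j; rewrite !mxE /tree_edge orbC.
have Hray := rayleigh As Hmax X.
have Eq : qv (tree_adj R h q1 q2 r1 r2) X X - mu * dotv X X =
          \sum_(i < n) psi h q1 q2 r1 r2 t mu G t aa i.
  rewrite /qv /dotv.
  have -> : \sum_i \sum_j X ord0 i * tree_adj R h q1 q2 r1 r2 i j * X ord0 j =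
      \sum_(i < n) \sum_(j < n) x i * (edgeP (tparent h q1 q2 r1 r2) i j : nat)%:R * x j.
    by apply: eq_bigr => i _; apply: eq_bigr => j _; rewrite !mxE.
  rewrite qform_tree; last exact: tparent_lt.
  rewrite mulr_sumr -sumrB; apply: eq_bigr => i _.
  by rewrite /psi !mxE.
have Dpos : 0 < \sum_(i < n) psi h q1 q2 r1 r2 t mu G t aa i.
  rewrite psi_total // (geo_tel _ G0 muE).
  have -> : G ^+ (2 * q2).+1 = G * (G ^+ q2) ^+ 2 by rewrite exprS -exprM mulnC.
  apply: alg_pos => //; exact: sqr_ge0.
have N1 : 0 < dotv X X.
  have n0 : (0 < n)%N by rewrite /n /tree_order; lia.
  rewrite /dotv (bigD1 (Ordinal n0)) //= !mxE.
  have -> : x 0%N = 1 by [].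
  rewrite mul1r; apply: ltr_pwDl => //; apply: sumr_ge0 => i _; rewrite -expr2; exact: sqr_ge0.
nra.
Qed.
Lemma s_pos (R : realType) (l : R) (l2 : 2 < l) : 0 < Num.sqrt (l ^+ 2 - 4).
Proof.
rewrite sqrtr_gt0 subr_gt0 expr2.
have H : 0 < (l - 2) * (l + 2) by apply: mulr_gt0; lra.
nra.
Qed.
Lemma s_sq (R : realType) (l : R) (l2 : 2 < l) : Num.sqrt (l ^+ 2 - 4) ^+ 2 = l ^+ 2 - 4.
Proof.
rewrite sqr_sqrtr // subr_ge0 expr2.
have H : 0 < (l - 2) * (l + 2) by apply: mulr_gt0; lra.
nra.
Qed.

Lemma theta_lt (R : realType) (l : R) (l2 : 2 < l) : theta l < -1.
Proof. rewrite /theta; have := s_pos l2; lra. Qed.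

Lemma theta_neq0 (R : realType) (l : R) (l2 : 2 < l) : theta l != 0.
Proof. rewrite lt_eqF //; have := theta_lt l2; lra. Qed.

Lemma theta_eq (R : realType) (l : R) (l2 : 2 < l) : theta l ^+ 2 + l * theta l + 1 = 0.
Proof. rewrite /theta; have := s_sq l2; set s := Num.sqrt _; move=> H. 
have -> : ((- l - s) / 2) ^+ 2 + l * ((- l - s) / 2) + 1 = (s ^+ 2 - (l ^+ 2 - 4)) / 4 by field.
by rewrite H subrr mul0r.
Qed.

Lemma lE (R : realType) (l : R) (l2 : 2 < l) : l = - (theta l + (theta l)^-1).
Proof.
have T0 := theta_neq0 l2; have E := theta_eq l2.
have : l * theta l = - (theta l ^+ 2 + 1) by lra.
move=> H; apply: (mulIf T0); rewrite H mulNr mulrDl mulVf // expr2; ring.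
Qed.

Lemma a2_lt0 (R : realType) (l : R) (l2 : 2 < l) : a2 l < 0.
Proof.
rewrite /a2; have l0 : 0 < l by lra.
have : l^-1 < 1 by rewrite invf_lt1 //; lra.
lra.
Qed.

Lemma a2_neq0 (R : realType) (l : R) (l2 : 2 < l) : a2 l != 0.
Proof. by rewrite lt_eqF // a2_lt0. Qed.

Lemma rlow_lt2 (R : realType) (l : R) (l2 : 2 < l) : rlow l < 2.
Proof.
rewrite /rlow; have T1 := theta_lt l2.
rewrite ltr_ndivrMr; last lra.
rewrite /a2 /theta; have sp := s_pos l2; have l0 : 0 < l by lra.
have il : 0 < l^-1 by rewrite invr_gt0.
lra.
Qed.
Lemma base_alg (R : realType) (T A r l : R) : T != 0 -> A != 0 -> 1 - T ^+ 2 != 0 ->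
  A * T - r * T ^+ 2 != 0 -> l = - (T + T^-1) ->
  - l - r / A = T + (T^-1 - T) / ((r - A * T) / (A * T - r * T ^+ 2) * (T ^+ 2) ^+ 1 + 1) /\
  (r - A * T) / (A * T - r * T ^+ 2) * (T ^+ 2) ^+ 1 + 1 != 0.
Proof.
move=> T0 A0 T2 den0 ->.
have w1E : (r - A * T) / (A * T - r * T ^+ 2) * (T ^+ 2) ^+ 1 + 1 =
      A * T * (1 - T ^+ 2) / (A * T - r * T ^+ 2).
  by rewrite expr1; field.
have w0 : (r - A * T) / (A * T - r * T ^+ 2) * (T ^+ 2) ^+ 1 + 1 != 0.
  by rewrite w1E !mulf_eq0 invr_eq0 (negbTE T0) (negbTE A0) (negbTE T2) (negbTE den0).
split => //; rewrite w1E; field.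
by rewrite T0 A0 T2 den0.
Qed.

Lemma step_alg (R : realType) (T B l u : R) : T != 0 -> B + 1 != 0 -> l = - (T + T^-1) ->
  u = T + (T^-1 - T) / (B + 1) -> u != 0 ->
  - l - u^-1 = T + (T^-1 - T) / (B * T ^+ 2 + 1) /\ B * T ^+ 2 + 1 != 0.
Proof.
move=> T0 w0 -> uE u0.
have w'E : B * T ^+ 2 + 1 = T * (B + 1) * u by rewrite uE; field; rewrite ?T0 ?w0.
have w'0 : B * T ^+ 2 + 1 != 0 by rewrite w'E !mulf_neq0.
split => //; rewrite w'E.
have -> : T^-1 - T = (u - T) * (B + 1) by rewrite uE; field; rewrite ?T0 ?w0.
field.
by rewrite T0 u0 w0.
Qed.
Lemma part_a (R : realType) (l r : R) (l2 : 2 < l) : 2 <= r -> forall j, (1 <= j)%N ->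
  (forall i, (1 <= i < j)%N -> zseq l r i != 0) ->
  zseq l r j = theta l + ((theta l)^-1 - theta l) / (beta l r * (theta l ^+ 2) ^+ j + 1)
  /\ beta l r * (theta l ^+ 2) ^+ j + 1 != 0.
Proof.
move=> r2.
have T0 := theta_neq0 l2; have T1 := theta_lt l2; have A0 := a2_neq0 l2.
have lEq := lE l2; have rl := rlow_lt2 l2.
have T2 : 1 - theta l ^+ 2 != 0.
  rewrite subr_eq0 eq_sym; apply/eqP => H.
  have : 1 < theta l ^+ 2 by rewrite expr2; nra.
  by rewrite H ltxx.
have den0 : a2 l * theta l - r * theta l ^+ 2 != 0.
  have -> : a2 l * theta l - r * theta l ^+ 2 = theta l * (a2 l - r * theta l) by ring.
  rewrite mulf_neq0 //; apply/eqP => H.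
  have : rlow l = r by rewrite /rlow; apply: (mulIf T0); rewrite mulfVK //; lra.
  lra.
elim=> [//|j IH] j1 Hnz.
case: j IH j1 Hnz => [|k] IH _ Hnz.
  exact: (base_alg T0 A0 T2 den0 lEq).
have Hnz' : forall i, (1 <= i < k.+1)%N -> zseq l r i != 0.
  by move=> i Hi; apply: Hnz; lia.
have [IH1 IH2] := IH isT Hnz'.
have u0 : zseq l r k.+1 != 0 by apply: Hnz; lia.
have := step_alg T0 IH2 lEq IH1 u0.
by rewrite -[zseq l r k.+2]/(- l - (zseq l r k.+1)^-1) [(_ ^+ 2) ^+ k.+2]exprSr mulrA.
Qed.
Lemma den_neq0 (R : realType) (l r : R) (l2 : 2 < l) : r != rlow l ->
  a2 l * theta l - r * theta l ^+ 2 != 0.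
Proof.
move=> rne; have T0 := theta_neq0 l2.
have -> : a2 l * theta l - r * theta l ^+ 2 = theta l * (a2 l - r * theta l) by ring.
rewrite mulf_neq0 //; apply: contra rne => /eqP H.
apply/eqP; rewrite /rlow; apply: (mulIf T0); rewrite mulfVK //; lra.
Qed.

Lemma beta_cont (R : realType) (l : R) (l2 : 2 < l) :
  {within [set r : R | 2 < r /\ r != rlow l], continuous (fun r : R => beta l r : R)}.
Proof.
apply: continuous_in_subspaceT => x; rewrite inE => -[_ xne].
rewrite /beta.
apply: (@continuousM R R^o (fun r : R => r - a2 l * theta l)
          (fun r : R => (a2 l * theta l - r * theta l ^+ 2)^-1)).
  apply: (@continuousB R R^o R^o (fun r : R => r) (fun _ => a2 l * theta l)).
    exact: cvg_id.
  exact: cst_continuous.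
apply: (@continuousV R R^o (fun r : R => a2 l * theta l - r * theta l ^+ 2)).
  exact: den_neq0.
apply: (@continuousB R R^o R^o (fun _ => a2 l * theta l) (fun r : R => r * theta l ^+ 2)).
  exact: cst_continuous.
apply: (@continuousM R R^o (fun r : R => r) (fun _ => theta l ^+ 2)).
  exact: cvg_id.
exact: cst_continuous.
Qed.

Lemma beta_root (R : realType) (l : R) (l2 : 2 < l) (r : R) :
  r != rlow l -> (beta l r = 0 <-> r = rup l).
Proof.
move=> rne; have d0 := den_neq0 l2 rne.
rewrite /beta /rup; split.
  by move/eqP; rewrite mulf_eq0 invr_eq0 (negbTE d0) orbF subr_eq0 => /eqP.
by move=> ->; rewrite subrr mul0r.
Qed.

Lemma beta_pos (R : realType) (l : R) (l2 : 2 < l) (r : R) :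
  rlow l < r < rup l -> 0 < beta l r.
Proof.
move=> /andP[H1 H2]; have T1 := theta_lt l2.
have T0 : theta l < 0 by lra.
have H3 : r * theta l < a2 l by rewrite -ltr_ndivrMr.
rewrite /beta /rup in H2 *.
rewrite nmulr_rgt0; last by rewrite subr_lt0.
rewrite invr_lt0.
have -> : a2 l * theta l - r * theta l ^+ 2 = theta l * (a2 l - r * theta l) by ring.
have : 0 < a2 l - r * theta l by lra.
move=> H; nra.
Qed.
Lemma part_c (R : realType) (l r : R) (l2 : 2 < l) : 2 <= r -> rlow l < r < rup l ->
 [/\ (forall j, (1 <= j)%N -> zseq l r j < 0),
     (forall j, (1 <= j)%N -> zseq l r j.+1 < zseq l r j) &
     zseq l r j @[j --> \oo] --> theta l].
Proof.
move=> r2 Hr.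
have bp := beta_pos l2 Hr.
have T1 := theta_lt l2.
have T0 := theta_neq0 l2.
have iT : theta l * (theta l)^-1 = 1 by rewrite mulfV.
have iTneg : -1 < (theta l)^-1 < 0.
  apply/andP; split; nra.
have dpos : 0 < (theta l)^-1 - theta l by lra.
have T2 : 1 < theta l ^+ 2 by rewrite expr2; nra.
have Ppos : forall j, 0 < (theta l ^+ 2) ^+ j by move=> j; apply: exprn_gt0; lra.
have wpos : forall j, 1 < beta l r * (theta l ^+ 2) ^+ j + 1.
  by move=> j; rewrite ltrDr; apply: mulr_gt0.
have neg : forall j, (1 <= j)%N -> zseq l r j < 0.
  elim/ltn_ind => j IH j1.
  have [E _] := part_a l2 r2 j1 (fun i Hi => negbT (lt_eqF (IH i (proj2 (andP Hi)) (proj1 (andP Hi))))).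
  rewrite E.
  have := wpos j; set w := beta l r * _ + 1 => w1.
  have : ((theta l)^-1 - theta l) / w < (theta l)^-1 - theta l.
    by rewrite ltr_pdivrMr ?ltr_pMr //; lra.
  lra.
have form : forall j, (1 <= j)%N -> zseq l r j =
    theta l + ((theta l)^-1 - theta l) / (beta l r * (theta l ^+ 2) ^+ j + 1).
  move=> j j1; have [E _] := part_a l2 r2 j1 (fun i Hi => negbT (lt_eqF (neg i (proj1 (andP Hi))))).
  exact: E.
split => //.
  move=> j j1; rewrite !form //.
  rewrite ltrD2l ltr_pM2l // ltf_pV2 ?posrE; last 2 first.
  - by apply: lt_trans (wpos _); exact: ltr01.
  - by apply: lt_trans (wpos _); exact: ltr01.
  rewrite ltrD2r [(_ ^+ 2) ^+ j.+1]exprSr mulrA ltr_pMr //.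
  by apply: mulr_gt0.
apply/cvgrPdist_lt => e e0.
have q1 : `|(theta l ^+ 2)^-1| < 1.
  rewrite ger0_norm; last by rewrite invr_ge0; lra.
  by rewrite invf_lt1 //; lra.
have := cvg_geometric (((theta l)^-1 - theta l) / beta l r) q1.
move=> /cvgrPdist_lt /(_ e e0) Hg.
apply: filterS2 (nbhs_infty_ge 1%N) Hg => j j1 Hgj.
have bP : 0 < beta l r * (theta l ^+ 2) ^+ j by apply: mulr_gt0.
have gE : geometric (((theta l)^-1 - theta l) / beta l r) (theta l ^+ 2)^-1 j =
    ((theta l)^-1 - theta l) / (beta l r * (theta l ^+ 2) ^+ j).
  by rewrite /= exprVn -mulrA -invfM.
rewrite form // opprD addrA subrr sub0r normrN ger0_norm; last first.
  by apply: divr_ge0; [lra | apply: ltW; apply: lt_trans (wpos j); exact: ltr01].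
apply: le_lt_trans Hgj.
rewrite sub0r normrN gE ger0_norm; last by apply: divr_ge0; [lra | exact: ltW].
rewrite ler_pM2l // lef_pV2 ?posrE //; last by apply: lt_trans (wpos j); exact: ltr01.
by rewrite lerDl ler01.
Qed.
Unset Implicit Arguments.
Theorem theorem3p2 (R : realType) (r1 r2 h q1 q2 : nat) (l : R) :
  (2 <= r1)%N -> (r1 < r2)%N ->
  (2 <= h)%N -> (2 <= q1)%N -> (2 <= q2)%N ->
  is_spectral_radius (tree_adj R h q1 q2 r1 r2) l ->
  [/\ (* (a) *)
      (forall (r : R) (j : nat), 2 <= r -> (1 <= j)%N ->
         (forall i, (1 <= i < j)%N -> zseq l r i != 0) ->
         zseq l r j = theta l + ((theta l)^-1 - theta l)
                                / (beta l r * (theta l ^+ 2) ^+ j + 1)),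
      (* (b) *)
      [/\ {within [set r : R | 2 < r /\ r != rlow l], continuous (fun r : R => beta l r : R)},
          (forall r : R, r != rlow l -> (beta l r = 0 <-> r = rup l)) &
          (forall r : R, rlow l < r < rup l -> 0 < beta l r)] &
      (* (c) *)
      (forall r : R, r = r1%:R \/ r = r2%:R ->
         [/\ (forall j, (1 <= j)%N -> zseq l r j < 0),
             (forall j, (1 <= j)%N -> zseq l r j.+1 < zseq l r j) &
             zseq l r j @[j --> \oo] --> theta l])].
Proof.
move=> r12 r1r2 h2 q12 q22 Hsp.
have q21 : (1 <= q2)%N by lia.
have r1R : (2 : R) <= r1%:R by rewrite (ler_nat R 2 r1).
have r12R : (r1%:R : R) < r2%:R by rewrite ltr_nat.
have r23R : (3 : R) <= r2%:R by rewrite (ler_nat R 3 r2); lia.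
have l2 : 2 < l.
  apply: (@test_gt R r1 r2 h q1 q2 l 2 1 h2 q12 q21 Hsp) => //.
    by rewrite invr1.
  have -> : (2 : R) ^+ 2 - 1 = 3 by rewrite expr2; lra.
  lra.
have key : r2%:R < rup l.
  have G1 : 1 <= - theta l by have := theta_lt l2; lra.
  have muE : l = - theta l + (- theta l)^-1 by rewrite invrN -opprD; exact: lE l2.
  have H : r2%:R * (l / (l ^+ 2 - 1)) < - theta l.
    rewrite ltNge; apply/negP => H.
    by have := @test_gt R r1 r2 h q1 q2 l l (- theta l) h2 q12 q21 Hsp G1 muE H; rewrite ltxx.
  have lp : 0 < l by lra.
  have l21 : 0 < l ^+ 2 - 1 by rewrite expr2; nra.
  have k0 : 0 < l / (l ^+ 2 - 1) by apply: divr_gt0.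
  rewrite /rup /a2.
  have -> : (- l + l^-1) * theta l = (- theta l) / (l / (l ^+ 2 - 1)).
    by field; rewrite gt_eqF // gt_eqF.
  by rewrite ltr_pdivlMr.
have rl := rlow_lt2 l2.
split.
- by move=> r j r2' j1 Hnz; exact: (part_a l2 r2' j1 Hnz).1.
- split; [exact: beta_cont l2 | move=> r rne; exact: (beta_root l2 rne) | move=> r H; exact: (beta_pos l2 H)].
- move=> r [->|->]; apply: part_c l2 _ _.
  + exact: r1R.
  + apply/andP; split; lra.
  + lra.
  + apply/andP; split; lra.
Qed.
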